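(* Let $n\in\mathbb{Z}$ and let $x^n$ denote the $n$-th power of the invertible dot $x$ in $\mathrm{QAW}(A;z)$ (so $x^n$ is a power of $x^{-1}$ if $n<0$). In $\mathrm{End}_{\mathrm{QAW}(A;z)}(\uparrow\otimes\uparrow)$ the following hold, where $T:=z\sum_{b\in B_A}\tau_b\otimes\tau_{b^\vee}$: (i) $S\circ(1\otimes x^n)=(x^n\otimes 1)\circ S^- -\sum_{r+s=n,\ r,s>0}(x^r\otimes x^s)\circ T$ if $n>0$, and $S\circ(1\otimes x^n)=(x^n\otimes 1)\circ S^- +\sum_{r+s=n,\ r,s\le 0}(x^r\otimes x^s)\circ T$ if $n\le 0$; (ii) $S\circ(x^n\otimes 1)=(1\otimes x^n)\circ S^- +\sum_{r+s=n,\ r,s\ge 0}(x^r\otimes x^s)\circ T$ if $n\ge 0$, and $S\circ(x^n\otimes 1)=(1\otimes x^n)\circ S^- -\sum_{r+s=n,\ r,s<0}(x^r\otimes x^s)\circ T$ if $n<0$; (iii) $S^-\circ(x^n\otimes 1)=(1\otimes x^n)\circ S +\sum_{r+s=n,\ r,s>0}(x^r\otimes x^s)\circ T$ if $n>0$, and $S^-\circ(x^n\otimes 1)=(1\otimes x^n)\circ S -\sum_{r+s=n,\ r,s\le 0}(x^r\otimes x^s)\circ T$ if $n\le 0$; (iv) $S^-\circ(1\otimes x^n)=(x^n\otimes 1)\circ S -\sum_{r+s=n,\ r,s\ge 0}(x^r\otimes x^s)\circ T$ if $n\ge 0$, and $S^-\circ(1\otimes x^n)=(x^n\otimes 1)\circ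 S +\sum_{r+s=n,\ r,s<0}(x^r\otimes x^s)\circ T$ if $n<0$. (All sums are over pairs of integers $(r,s)$.)
   Context: Let $\Bbbk$ be a commutative ring, $z\in\Bbbk^\times$, and $A$ a symmetric Frobenius superalgebra over $\Bbbk$: it has an even trace $\mathrm{tr}:A\to\Bbbk$ with $\mathrm{tr}(ab)=(-1)^{\bar a\bar b}\mathrm{tr}(ba)$, a homogeneous basis $B_A$ and a left dual basis $\{b^\vee\}$ with $\mathrm{tr}(b^\vee c)=\delta_{b,c}$. Monoidal supercategories satisfy the super interchange law $(f'\otimes g)\circ(f\otimes g')=(-1)^{\bar f\bar g}(f'\circ f)\otimes(g\circ g')$. The quantum affine wreath product category $\mathrm{QAW}(A;z)$ is the strict $\Bbbk$-linear monoidal supercategory generated by one object $\uparrow$ and morphisms: even $S,S^-:\uparrow\otimes\uparrow\to\uparrow\otimes\uparrow$ (positive and negative crossing), $\tau_a:\uparrow\to\uparrow$ of parity $\bar a$ for $a\in A$ (tokens), and an even invertible $x:\uparrow\to\uparrow$ (dot), subject to: $a\mapsto\tau_a$ is a unital superalgebra homomorphism $A\to\mathrm{End}(\uparrow)$; $S\circ S^-=S^-\circ S=1_{\uparrow\otimes\uparrow}$; $(S\otimes 1)(1\otimes S)(S\otimes 1)=(1\otimes S)(S\otimes 1)(1\otimes S)$; $S\circ(\tau_a\otimes 1)=(1\otimes\tau_a)\circ S$ and $S^-\circ(\tau_a\otimes 1)=(1\otimes\tau_a)\circ S^-$; $S-S^-=z\sum_{b\in B_A}\tau_b\otimes\tau_{b^\vee}$;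 $x\circ\tau_a=\tau_a\circ x$; $S\circ(1\otimes x)=(x\otimes1)\circ S^-$ and $S^-\circ(x\otimes 1)=(1\otimes x)\circ S$. *)

(* Defs.v *)
(* Quantum affine wreath product category QAW(A;z),
   rendered through its universal property: a statement about QAW(A;z)
   is stated for every strict k-linear monoidal supercategory generated
   (as far as objects go) by one object, equipped with morphisms S, S^-,
   tau_a, x (and x^{-1}) satisfying the defining relations of QAW(A;z).
   QAW(A;z) is itself such a model, and it is the initial one. *)
From HB Require Import structures.
From mathcomp Require Import all_boot all_order all_algebra.
Set Implicit Arguments. Unset Strict Implicit. Unset Printing Implicit Defensive.
Import GRing.Theory.
Local Open Scope ring_scope.

Definition sgn (R : pzRingType) (b : bool) : R := if b then -1 else 1.

(* V = V_0 (+) V_1 as a super k-module; par p v means "v is homogeneous of parity p" *)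
Definition graded (k : pzRingType) (V : lmodType k) (par : bool -> pred V) : Prop :=
  [/\ (forall p, par p 0),
      (forall p (a : k) (u v : V), par p u -> par p v -> par p (a *: u + v)),
      (forall v : V, exists v0 v1, [/\ par false v0, par true v1 & v = v0 + v1]) &
      (forall v : V, par false v -> par true v -> v = 0)].

Definition is_superalg (k : comPzRingType) (A : algType k) (par : bool -> pred A) : Prop :=
  [/\ graded par, par false 1 &
      (forall p q (a b : A), par p a -> par q b -> par (p (+) q) (a * b))].

(* symmetric Frobenius superalgebra data: even trace tr, homogeneous basis bA
   (indexed by 'I_nB), left dual basis bAv with tr (bAv i * bA j) = delta_ij *)
Definition is_symm_frobenius (k : comPzRingType) (A : algType k) (par : bool -> pred A)
    (tr : A -> k) (nB : nat) (bA bAv : 'I_nB -> A) : Prop :=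
  [/\ is_superalg par,
      (forall (c : k) (u v : A), tr (c *: u + v) = c * tr u + tr v),
      (forall a : A, par true a -> tr a = 0) &
      (forall p q (a b : A), par p a -> par q b -> tr (a * b) = sgn k (p && q) * tr (b * a))] /\
  [/\ (forall i, exists p, par p (bA i)),
      (forall c : 'I_nB -> k, \sum_i c i *: bA i = 0 -> forall i, c i = 0),
      (forall a : A, exists c : 'I_nB -> k, a = \sum_i c i *: bA i) &
      (forall i j, tr (bAv i * bA j) = (i == j)%:R)].

(* A strict k-linear monoidal supercategory whose objects are the tensor powers
   of one object: object n = (up)^{(x) n}, with tensor on objects given by +. *)
Record msupercat (k : pzRingType) := MSupercat {
  Mor : nat -> nat -> lmodType k;
  mpar : forall m n, bool -> pred (Mor m n);
  mcomp : forall m n p, Mor n p -> Mor m n -> Mor m p;   (* mcomp g f = g o f *)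
  midm : forall n, Mor n n;
  mtens : forall m n m' n', Mor m n -> Mor m' n' -> Mor (m + m') (n + n')
}.
Arguments mcomp {k} m0 {m n p} : rename.
Arguments midm {k} m0 n : rename.
Arguments mtens {k} m0 {m n m' n'} : rename.
Arguments mpar {k} m0 {m n} : rename.

Definition castH (H : nat -> nat -> Type) m n m' n' (em : m = m') (en : n = n')
  (f : H m n) : H m' n' := match em, en with erefl, erefl => f end.

Definition is_msupercat (k : pzRingType) (C : msupercat k) : Prop :=
  [/\ [/\ (forall m n, graded (@mpar k C m n)),
      (forall m n p (a : k) (g g' : Mor C n p) (f : Mor C m n),
          mcomp C (a *: g + g') f = a *: mcomp C g f + mcomp C g' f),
      (forall m n p (a : k) (g : Mor C n p) (f f' : Mor C m n),
          mcomp C g (a *: f + f') = a *: mcomp C g f + mcomp C g f'),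
      (forall m n p q (h : Mor C p q) (g : Mor C n p) (f : Mor C m n),
          mcomp C h (mcomp C g f) = mcomp C (mcomp C h g) f) &
      (forall m n (f : Mor C m n), mcomp C (midm C n) f = f /\ mcomp C f (midm C m) = f)],
      (forall m n p b c (g : Mor C n p) (f : Mor C m n),
          mpar C b f -> mpar C c g -> mpar C (b (+) c) (mcomp C g f)),
      (forall n, mpar C false (midm C n)),
      (forall m n m' n' (a : k) (f f' : Mor C m n) (g : Mor C m' n'),
          mtens C (a *: f + f') g = a *: mtens C f g + mtens C f' g) /\
      (forall m n m' n' (a : k) (f : Mor C m n) (g g' : Mor C m' n'),
          mtens C f (a *: g + g') = a *: mtens C f g + mtens C f g') &
      [/\ (forall m n m' n' b c (f : Mor C m n) (g : Mor C m' n'),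
            mpar C b f -> mpar C c g -> mpar C (b (+) c) (mtens C f g)),
          (forall m n, mtens C (midm C m) (midm C n) = midm C (m + n)),
          (forall a b c d e h bf bg (f : Mor C a b) (f' : Mor C b c)
                  (g' : Mor C d e) (g : Mor C e h),
              mpar C bf f -> mpar C bg g ->
              mcomp C (mtens C f' g) (mtens C f g') =
              sgn k (bf && bg) *: mtens C (mcomp C f' f) (mcomp C g g')),
          (forall m n m' n' m'' n'' (f : Mor C m n) (g : Mor C m' n') (h : Mor C m'' n''),
              castH (H := Mor C) (addnA m m' m'') (addnA n n' n'') (mtens C f (mtens C g h))
              = mtens C (mtens C f g) h) &
          (forall m n (f : Mor C m n),
              mtens C (midm C 0) f = f /\
              castH (H := Mor C) (addn0 m) (addn0 n) (mtens C f (midm C 0)) = f)]].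

Definition Tel (k : pzRingType) (A : Type) (C : msupercat k) (z : k)
    (tau : A -> Mor C 1 1) (nB : nat) (bA bAv : 'I_nB -> A) : Mor C 2 2 :=
  z *: \sum_(i < nB) mtens C (tau (bA i)) (tau (bAv i)).

(* The defining relations of QAW(A;z), for the images S, Sm (= S^-), tau, x
   of the generators, together with an inverse xi of the dot x. *)
Definition QAW_relations (k : comPzRingType) (A : algType k) (Apar : bool -> pred A)
    (z : k) (nB : nat) (bA bAv : 'I_nB -> A)
    (C : msupercat k) (S Sm : Mor C 2 2) (tau : A -> Mor C 1 1) (x xi : Mor C 1 1) : Prop :=
  [/\ [/\ mpar C false S, mpar C false Sm, mpar C false x &
          (forall p (a : A), Apar p a -> mpar C p (tau a))],
      [/\
          (forall (c : k) (a b : A), tau (c *: a + b) = c *: tau a + tau b),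
          tau 1 = midm C 1 &
          (forall a b : A, tau (a * b) = mcomp C (tau a) (tau b))],
      (mcomp C x xi = midm C 1 /\ mcomp C xi x = midm C 1) /\
      (mcomp C S Sm = midm C 2 /\ mcomp C Sm S = midm C 2),
      (mcomp C (mtens C S (midm C 1) : Mor C 3 3)
        (mcomp C (mtens C (midm C 1) S : Mor C 3 3) (mtens C S (midm C 1) : Mor C 3 3))
      = mcomp C (mtens C (midm C 1) S : Mor C 3 3)
          (mcomp C (mtens C S (midm C 1) : Mor C 3 3) (mtens C (midm C 1) S : Mor C 3 3))) /\
      (forall a : A, mcomp C S (mtens C (tau a) (midm C 1)) = mcomp C (mtens C (midm C 1) (tau a)) S
                  /\ mcomp C Sm (mtens C (tau a) (midm C 1)) = mcomp C (mtens C (midm C 1) (tau a)) Sm) &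
      [/\
          S - Sm = @Tel k A C z tau nB bA bAv,
          (forall a : A, mcomp C x (tau a) = mcomp C (tau a) x),
          mcomp C S (mtens C (midm C 1) x) = mcomp C (mtens C x (midm C 1)) Sm &
          mcomp C Sm (mtens C x (midm C 1)) = mcomp C (mtens C (midm C 1) x) S]].

Definition xpow (k : pzRingType) (C : msupercat k) (x xi : Mor C 1 1) (n : int) : Mor C 1 1 :=
  match n with
  | Posz m => iter m (mcomp C x) (midm C 1)
  | Negz m => iter m.+1 (mcomp C xi) (midm C 1)
  end.

(* Main.v *)
Require Import Defs.
From HB Require Import structures.
From mathcomp Require Import all_boot all_order all_algebra zify.
Import GRing.Theory.
Local Open Scope ring_scope.

Lemma dbl0 (V : zmodType) (c : V) : c = c + c -> c = 0.
Proof. by move=> h; have := subrr c; rewrite {1}h addrK. Qed.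

Lemma comp_addl {k : pzRingType} {C : msupercat k} (HC : is_msupercat C)
  m n p (g g' : Mor C n p) (f : Mor C m n) :
  mcomp C (g + g') f = mcomp C g f + mcomp C g' f.
Proof. case: HC => [[_ cl _ _ _] _ _ _ _]. by have := cl _ _ _ 1 g g' f; rewrite !scale1r. Qed.

Lemma comp_addr {k : pzRingType} {C : msupercat k} (HC : is_msupercat C)
  m n p (g : Mor C n p) (f f' : Mor C m n) :
  mcomp C g (f + f') = mcomp C g f + mcomp C g f'.
Proof. case: HC => [[_ _ cr _ _] _ _ _ _]. by have := cr _ _ _ 1 g f f'; rewrite !scale1r. Qed.

Lemma comp_scalel {k : pzRingType} {C : msupercat k} (HC : is_msupercat C)
  m n p a (g : Mor C n p) (f : Mor C m n) :
  mcomp C (a *: g) f = a *: mcomp C g f.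
Proof.
case: HC => [[_ cl _ _ _] _ _ _ _].
have h0 : mcomp C (0 : Mor C n p) f = 0.
  have := cl _ _ _ 1 (0 : Mor C n p) 0 f; rewrite !scale1r addr0.
  exact: dbl0.
by have := cl _ _ _ a g 0 f; rewrite !addr0 h0 addr0.
Qed.

Lemma comp_scaler {k : pzRingType} {C : msupercat k} (HC : is_msupercat C)
  m n p a (g : Mor C n p) (f : Mor C m n) :
  mcomp C g (a *: f) = a *: mcomp C g f.
Proof.
case: HC => [[_ _ cr _ _] _ _ _ _].
have h0 : mcomp C g (0 : Mor C m n) = 0.
  have := cr _ _ _ 1 g (0 : Mor C m n) 0; rewrite !scale1r addr0.
  exact: dbl0.
by have := cr _ _ _ a g f 0; rewrite !addr0 h0 addr0.
Qed.

Lemma tens_addl {k : pzRingType} {C : msupercat k} (HC : is_msupercat C)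
  m n m' n' (f f' : Mor C m n) (g : Mor C m' n') :
  mtens C (f + f') g = mtens C f g + mtens C f' g.
Proof. case: HC => [_ _ _ [tl _] _]. by have := tl _ _ _ _ 1 f f' g; rewrite !scale1r. Qed.

Lemma tens_addr {k : pzRingType} {C : msupercat k} (HC : is_msupercat C)
  m n m' n' (f : Mor C m n) (g g' : Mor C m' n') :
  mtens C f (g + g') = mtens C f g + mtens C f g'.
Proof. case: HC => [_ _ _ [_ tr] _]. by have := tr _ _ _ _ 1 f g g'; rewrite !scale1r. Qed.

Lemma tens_scalel {k : pzRingType} {C : msupercat k} (HC : is_msupercat C)
  m n m' n' a (f : Mor C m n) (g : Mor C m' n') :
  mtens C (a *: f) g = a *: mtens C f g.
Proof.
case: HC => [_ _ _ [tl _] _].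
have h0 : mtens C (0 : Mor C m n) g = 0.
  have := tl _ _ _ _ 1 (0 : Mor C m n) 0 g; rewrite !scale1r addr0.
  exact: dbl0.
by have := tl _ _ _ _ a f 0 g; rewrite !addr0 h0 addr0.
Qed.

Lemma comp_suml {k : pzRingType} {C : msupercat k} (HC : is_msupercat C)
  m n p (I : Type) (r : seq I) (P : pred I) (F : I -> Mor C n p) (f : Mor C m n) :
  mcomp C (\sum_(i <- r | P i) F i) f = \sum_(i <- r | P i) mcomp C (F i) f.
Proof.
apply: (big_morph (fun g => mcomp C g f)).
  by move=> a b; rewrite comp_addl.
by rewrite -[X in mcomp C X f](scale0r (0 : Mor C n p)) comp_scalel // scale0r.
Qed.

Lemma comp_sumr {k : pzRingType} {C : msupercat k} (HC : is_msupercat C)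
  m n p (I : Type) (r : seq I) (P : pred I) (F : I -> Mor C m n) (g : Mor C n p) :
  mcomp C g (\sum_(i <- r | P i) F i) = \sum_(i <- r | P i) mcomp C g (F i).
Proof.
apply: (big_morph (fun f => mcomp C g f)).
  by move=> a b; rewrite comp_addr.
by rewrite -[X in mcomp C g X](scale0r (0 : Mor C m n)) comp_scaler // scale0r.
Qed.

Lemma comp_oppl {k : pzRingType} {C : msupercat k} (HC : is_msupercat C)
  m n p (g : Mor C n p) (f : Mor C m n) : mcomp C (- g) f = - mcomp C g f.
Proof. by rewrite -scaleN1r comp_scalel // scaleN1r. Qed.
Lemma comp_oppr {k : pzRingType} {C : msupercat k} (HC : is_msupercat C)
  m n p (g : Mor C n p) (f : Mor C m n) : mcomp C g (- f) = - mcomp C g f.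
Proof. by rewrite -scaleN1r comp_scaler // scaleN1r. Qed.
Lemma comp_subl {k : pzRingType} {C : msupercat k} (HC : is_msupercat C)
  m n p (g g' : Mor C n p) (f : Mor C m n) :
  mcomp C (g - g') f = mcomp C g f - mcomp C g' f.
Proof. by rewrite comp_addl // comp_oppl. Qed.
Lemma comp_subr {k : pzRingType} {C : msupercat k} (HC : is_msupercat C)
  m n p (g : Mor C n p) (f f' : Mor C m n) :
  mcomp C g (f - f') = mcomp C g f - mcomp C g f'.
Proof. by rewrite comp_addr // comp_oppr. Qed.

Lemma compA' {k : pzRingType} {C : msupercat k} (HC : is_msupercat C)
  m n p q (h : Mor C p q) (g : Mor C n p) (f : Mor C m n) :
  mcomp C h (mcomp C g f) = mcomp C (mcomp C h g) f.
Proof. by case: HC => [[_ _ _ a _] _ _ _ _]; apply: a. Qed.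

Lemma comp1l {k : pzRingType} {C : msupercat k} (HC : is_msupercat C)
  m n (f : Mor C m n) : mcomp C (midm C n) f = f.
Proof. by case: HC => [[_ _ _ _ i] _ _ _ _]; case: (i _ _ f). Qed.
Lemma comp1r {k : pzRingType} {C : msupercat k} (HC : is_msupercat C)
  m n (f : Mor C m n) : mcomp C f (midm C m) = f.
Proof. by case: HC => [[_ _ _ _ i] _ _ _ _]; case: (i _ _ f). Qed.

Lemma xch_l {k : pzRingType} {C : msupercat k} (HC : is_msupercat C)
  a b c d e h (f : Mor C a b) (f' : Mor C b c) (g' : Mor C d e) (g : Mor C e h) :
  mpar C false f ->
  mcomp C (mtens C f' g) (mtens C f g') = mtens C (mcomp C f' f) (mcomp C g g').
Proof.
move=> pf.
have HC' := HC; case: HC' => [[gr _ _ _ _] _ _ _ [_ _ xc _ _]].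
case: (gr e h) => _ _ dec _.
have [g0 [g1 [p0 p1 ->]]] := dec g.
rewrite tens_addr // comp_addl // !(xc _ _ _ _ _ _ false _ _ _ _ _ pf p0)
  !(xc _ _ _ _ _ _ false _ _ _ _ _ pf p1) /= /sgn !scale1r -tens_addr //.
by rewrite comp_addl.
Qed.

Lemma xch_r {k : pzRingType} {C : msupercat k} (HC : is_msupercat C)
  a b c d e h (f : Mor C a b) (f' : Mor C b c) (g' : Mor C d e) (g : Mor C e h) :
  mpar C false g ->
  mcomp C (mtens C f' g) (mtens C f g') = mtens C (mcomp C f' f) (mcomp C g g').
Proof.
move=> pg.
have HC' := HC; case: HC' => [[gr _ _ _ _] _ _ _ [_ _ xc _ _]].
case: (gr a b) => _ _ dec _.
have [f0 [f1 [p0 p1 ->]]] := dec f.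
rewrite tens_addl // comp_addr // !(xc _ _ _ _ _ _ _ false _ _ _ _ p0 pg)
  !(xc _ _ _ _ _ _ _ false _ _ _ _ p1 pg) /= ?andbF /sgn !scale1r -tens_addl //.
by rewrite comp_addr.
Qed.
Lemma sumS (M : zmodType) (m : nat) (F : nat -> M) :
  \sum_(i < m.+1 | (0 < i)%N) F i = \sum_(i < m) F i.+1.
Proof. by rewrite big_mkcond big_ord_recl /= add0r. Qed.

Lemma sum0S (M : zmodType) (m : nat) (F : nat -> M) :
  \sum_(i < m.+1) F i = F 0%N + \sum_(i < m) F i.+1.
Proof. by rewrite big_ord_recl. Qed.

Lemma addD {M : zmodType} {f : M -> M} (Hf : forall a b, f (a - b) = f a - f b) a b :
  f (a + b) = f a + f b.
Proof.
have f0 : f 0 = 0.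
  by have := Hf 0 0; rewrite subr0 subrr.
have fN : forall b, f (- b) = - f b by move=> c; rewrite -sub0r Hf f0 sub0r.
by rewrite -[b]opprK Hf !fN !opprK.
Qed.

Lemma addN {M : zmodType} {f : M -> M} (Hf : forall a b, f (a - b) = f a - f b) a :
  f (- a) = - f a.
Proof.
have f0 : f 0 = 0.
  by have := Hf 0 0; rewrite subr0 subrr.
by rewrite -sub0r Hf f0 sub0r.
Qed.

Lemma add_sum {M : zmodType} {f : M -> M} (Hf : forall a b, f (a - b) = f a - f b)
  (I : Type) (r : seq I) (P : pred I) (F : I -> M) :
  f (\sum_(i <- r | P i) F i) = \sum_(i <- r | P i) f (F i).
Proof.
apply: (big_morph f); last by have := Hf 0 0; rewrite subr0 subrr.
exact: addD.
Qed.

Lemma L1 {M : zmodType} (a a' b b' s s' : M) :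
  a = a' -> b = b' -> s = s' -> a + (s + b) - b' - a' = s'.
Proof. by move=> <- <- <-; rewrite addrA addrK [a + s]addrC addrK. Qed.
Lemma L2 {M : zmodType} (a a' b b' s s' : M) :
  a = a' -> b = b' -> s = s' -> - s - b' - a' = - (a + (s' + b)).
Proof. by move=> <- <- <-; rewrite !opprD addrC. Qed.
Lemma L3 {M : zmodType} (a b c d : M) :
  b = a -> c = a -> d = a -> b - c - d = - a.
Proof. by move=> -> -> ->; rewrite subrr sub0r. Qed.

Lemma comb (M : zmodType) (U : int -> int -> M) (D1 D2 D3 D4 : int -> M)
  (rx rxi lx lxi : M -> M) :
  (forall a b, rx (a - b) = rx a - rx b) ->
  (forall a b, rxi (a - b) = rxi a - rxi b) ->
  (forall a b, lx (a - b) = lx a - lx b) ->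
  (forall a b, lxi (a - b) = lxi a - lxi b) ->
  (forall a b, rx (U a b) = U a (b + 1)) ->
  (forall a b, rxi (U a b) = U a (b - 1)) ->
  (forall a b, lx (U a b) = U (a + 1) b) ->
  (forall a b, lxi (U a b) = U (a - 1) b) ->
  (forall v, rxi (rx v) = v) -> (forall v, lxi (lx v) = v) ->
  D1 0 = U 0 0 -> D2 0 = U 0 0 ->
  (forall n, rx (D1 n) = D1 (n + 1) + U n 1) ->
  (forall n, lx (D2 n) = D2 (n + 1) - U 0 (n + 1)) ->
  (forall n, D3 n = D2 n - U n 0 - U 0 n) ->
  (forall n, D4 n = D1 n - U n 0 - U 0 n) ->
  forall n : int,
  (0 < n -> D1 n = - \sum_(i < `|n|%N | (0 < i)%N) U i%:Z (n - i%:Z)) /\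
  (n <= 0 -> D1 n = \sum_(i < `|n|.+1) U (- i%:Z) (n + i%:Z)) /\
  (0 <= n -> D2 n = \sum_(i < `|n|.+1) U i%:Z (n - i%:Z)) /\
  (n < 0 -> D2 n = - \sum_(i < `|n|%N | (0 < i)%N) U (- i%:Z) (n + i%:Z)) /\
  (0 < n -> D3 n = \sum_(i < `|n|%N | (0 < i)%N) U i%:Z (n - i%:Z)) /\
  (n <= 0 -> D3 n = - \sum_(i < `|n|.+1) U (- i%:Z) (n + i%:Z)) /\
  (0 <= n -> D4 n = - \sum_(i < `|n|.+1) U i%:Z (n - i%:Z)) /\
  (n < 0 -> D4 n = \sum_(i < `|n|%N | (0 < i)%N) U (- i%:Z) (n + i%:Z)).
Proof.
move=> arx arxi alx alxi rxU rxiU lxU lxiU rxK lxK D10 D20 D1S D2S D3E D4E.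
have ip : forall m : nat, D1 m.+1%:Z = - \sum_(i < m) U i.+1%:Z (m.+1%:Z - i.+1%:Z).
  elim=> [|m IH].
    rewrite big_ord0 oppr0.
    have := D1S 0; rewrite D10 rxU add0r.
    by move=> /(congr1 (fun v => v - U 0 1)); rewrite addrK subrr => <-.
  have := D1S m.+1%:Z; rewrite IH.
  have -> : m.+1%:Z + 1 = m.+2%:Z by lia.
  move=> /(congr1 (fun v => v - U m.+1%:Z 1)); rewrite addrK => <-.
  rewrite big_ord_recr /= opprD; congr (_ - _).
    rewrite (addN arx) (add_sum arx); congr (- _); apply: eq_bigr => i _; rewrite rxU; rewrite ?/bump /=; congr (U _ _); lia.
  rewrite ?/bump /=; congr (U _ _); lia.
have im : forall m : nat, D1 (- m%:Z) = \sum_(i < m.+1) U (- i%:Z) (- m%:Z + i%:Z).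
  elim=> [|m IH]; first by rewrite big_ord1 /= D10.
  have := congr1 rxi (D1S (- m.+1%:Z)).
  have -> : - m.+1%:Z + 1 = - m%:Z by lia.
  rewrite rxK IH => ->.
  rewrite (addD arxi).
  rewrite [in RHS]big_ord_recr /= (add_sum arxi); congr (_ + _).
    apply: eq_bigr => i _; rewrite rxiU; rewrite ?/bump /=; congr (U _ _); lia.
  rewrite rxiU; rewrite ?/bump /=; congr (U _ _); lia.
have jp : forall m : nat, D2 m%:Z = \sum_(i < m.+1) U i%:Z (m%:Z - i%:Z).
  elim=> [|m IH]; first by rewrite big_ord1 /= D20.
  have := D2S m%:Z; rewrite IH.
  move=> /(congr1 (fun v => v + U 0 (m%:Z + 1))); rewrite subrK => h.
  have -> : m.+1%:Z = m%:Z + 1 by lia.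
  rewrite -h [in RHS]big_ord_recl /= (add_sum alx) addrC; congr (_ + _).
    rewrite ?/bump /=; congr (U _ _); lia.
  apply: eq_bigr => i _; rewrite lxU; rewrite ?/bump /=; congr (U _ _); lia.
have jm : forall m : nat, D2 (- m.+1%:Z) = - \sum_(i < m) U (- i.+1%:Z) (- m.+1%:Z + i.+1%:Z).
  elim=> [|m IH].
    have := congr1 lxi (D2S (-1)); rewrite lxK.
    have -> : -1 + 1 = 0 :> int by [].
    rewrite D20 subrr big_ord0 oppr0 => ->.
    by have := alxi 0 0; rewrite subr0 subrr.
  have := congr1 lxi (D2S (- m.+2%:Z)).
  have -> : - m.+2%:Z + 1 = - m.+1%:Z by lia.
  rewrite lxK IH => ->.
  rewrite [in RHS]big_ord_recl /= (addD alxi) (addN alxi) (add_sum alxi) opprD addrC.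
  congr (_ + _).
    rewrite (addN alxi) lxiU; rewrite ?/bump /=; congr (- U _ _); lia.
  congr (- _); apply: eq_bigr => i _; rewrite lxiU; rewrite ?/bump /=; congr (U _ _); lia.
move=> n; split; [|split; [|split; [|split; [|split; [|split; [|split]]]]]].
- case: n => [[|m]|m] // _ /=; rewrite ip (sumS _ _ (fun i => U i%:Z (m.+1%:Z - i%:Z))); congr (- _); apply: eq_bigr => i _; rewrite ?/bump /=; congr (U _ _); lia.
- move=> hn; have [m ->] : exists m : nat, n = - m%:Z by exists `|n|%N; lia.
  have -> : `|- m%:Z|%N = m by lia.
  by rewrite im.
- move=> hn; have [m ->] : exists m : nat, n = m%:Z by exists `|n|%N; lia.
  by rewrite jp.
- move=> hn; have [m ->] : exists m : nat, n = - m.+1%:Z by exists `|n|.-1; lia.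
  have -> : `|- m.+1%:Z|%N = m.+1 by lia.
  by rewrite jm (sumS _ _ (fun i => U (- i%:Z) (- m.+1%:Z + i%:Z))).
- case: n => [[|m]|m] // _ /=; rewrite D3E jp (sumS _ _ (fun i => U i%:Z (m.+1%:Z - i%:Z))) [in LHS]big_ord_recl big_ord_recr /=.
  apply: L1; try (rewrite ?/bump /=; congr (U _ _); lia).
  by apply: eq_bigr => i _; rewrite ?/bump /=; congr (U _ _); lia.
- move=> hn; have [m ->] : exists m : nat, n = - m%:Z by exists `|n|%N; lia.
  have -> : `|- m%:Z|%N = m by lia.
  case: m => [|m].
    rewrite D3E D20 big_ord1; apply: L3; rewrite ?/bump /=; congr (U _ _); lia.
  rewrite D3E jm [in RHS]big_ord_recl [in RHS]big_ord_recr /=.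
  apply: L2; try (rewrite ?/bump /=; congr (U _ _); lia).
  by apply: eq_bigr => i _; rewrite ?/bump /=; congr (U _ _); lia.
- move=> hn; have [m ->] : exists m : nat, n = m%:Z by exists `|n|%N; lia.
  have -> : `|m%:Z|%N = m by lia.
  case: m => [|m].
    rewrite D4E D10 big_ord1; apply: L3; rewrite ?/bump /=; congr (U _ _); lia.
  rewrite D4E ip [in RHS]big_ord_recl [in RHS]big_ord_recr /=.
  apply: L2; try (rewrite ?/bump /=; congr (U _ _); lia).
  by apply: eq_bigr => i _; rewrite ?/bump /=; congr (U _ _); lia.
- move=> hn; have [m ->] : exists m : nat, n = - m.+1%:Z by exists `|n|.-1; lia.
  have -> : `|- m.+1%:Z|%N = m.+1 by lia.
  rewrite D4E im (sumS _ _ (fun i => U (- i%:Z) (- m.+1%:Z + i%:Z))) [in LHS]big_ord_recl big_ord_recr /=.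
  apply: L1; try (rewrite ?/bump /=; congr (U _ _); lia).
  by apply: eq_bigr => i _; rewrite ?/bump /=; congr (U _ _); lia.
Qed.
Lemma xl1 {k : pzRingType} {C : msupercat k} (HC : is_msupercat C)
  (f f' g g' : Mor C 1 1) : mpar C false f ->
  @mcomp k C 2 2 2 (mtens C f' g) (mtens C f g') = mtens C (mcomp C f' f) (mcomp C g g').
Proof. exact: (@xch_l k C HC 1 1 1 1 1 1). Qed.
Lemma xr1 {k : pzRingType} {C : msupercat k} (HC : is_msupercat C)
  (f f' g g' : Mor C 1 1) : mpar C false g ->
  @mcomp k C 2 2 2 (mtens C f' g) (mtens C f g') = mtens C (mcomp C f' f) (mcomp C g g').
Proof. exact: (@xch_r k C HC 1 1 1 1 1 1). Qed.

Lemma fromD {M : zmodType} (a b c : M) : a - b = c -> a = b + c.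
Proof. by move=> <-; rewrite addrC subrK. Qed.

Lemma RR_ {k : pzRingType} {C : msupercat k} (HC : is_msupercat C) (f g : Mor C 1 1) :
  mcomp C (mtens C (midm C 1) f) (mtens C (midm C 1) g) = mtens C (midm C 1) (mcomp C f g).
Proof.
have HC' := HC; case: HC' => [_ _ pid _ _].
by rewrite (xl1 HC) // comp1l.
Qed.

Lemma LL_ {k : pzRingType} {C : msupercat k} (HC : is_msupercat C) (f g : Mor C 1 1) :
  mcomp C (mtens C f (midm C 1)) (mtens C g (midm C 1)) = mtens C (mcomp C f g) (midm C 1).
Proof.
have HC' := HC; case: HC' => [_ _ pid _ _].
by rewrite (xr1 HC) // comp1l.
Qed.

Lemma TcR {k : pzRingType} {C : msupercat k} (HC : is_msupercat C) (A : Type) (z : k)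
  (tau : A -> Mor C 1 1) nB (bA bAv : 'I_nB -> A) (y : Mor C 1 1) :
  mpar C false y -> (forall a, mcomp C y (tau a) = mcomp C (tau a) y) ->
  mcomp C (@Tel k A C z tau nB bA bAv) (mtens C (midm C 1) y) =
  mcomp C (mtens C (midm C 1) y) (@Tel k A C z tau nB bA bAv).
Proof.
move=> py cy.
have HC' := HC; case: HC' => [_ _ pid _ _].
rewrite /Tel (comp_scalel HC) (comp_scaler HC) (comp_suml HC) (comp_sumr HC); congr (_ *: _).
apply: eq_bigr => i _.
by rewrite (xl1 HC) // (xr1 HC) // (comp1l HC) (comp1r HC) cy.
Qed.

Lemma TcL {k : pzRingType} {C : msupercat k} (HC : is_msupercat C) (A : Type) (z : k)
  (tau : A -> Mor C 1 1) nB (bA bAv : 'I_nB -> A) (y : Mor C 1 1) :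
  mpar C false y -> (forall a, mcomp C y (tau a) = mcomp C (tau a) y) ->
  mcomp C (@Tel k A C z tau nB bA bAv) (mtens C y (midm C 1)) =
  mcomp C (mtens C y (midm C 1)) (@Tel k A C z tau nB bA bAv).
Proof.
move=> py cy.
have HC' := HC; case: HC' => [_ _ pid _ _].
rewrite /Tel (comp_scalel HC) (comp_scaler HC) (comp_suml HC) (comp_sumr HC); congr (_ *: _).
apply: eq_bigr => i _.
by rewrite (xl1 HC) // (xr1 HC) // (comp1l HC) (comp1r HC) cy.
Qed.

Lemma iter_comm {k : pzRingType} {C : msupercat k} (HC : is_msupercat C) (u t : Mor C 1 1) :
  mcomp C u t = mcomp C t u ->
  forall j, mcomp C (iter j (mcomp C u) (midm C 1)) t = mcomp C t (iter j (mcomp C u) (midm C 1)).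
Proof.
move=> ut; elim=> [|j IH] /=; first by rewrite (comp1l HC) (comp1r HC).
by rewrite -(compA' HC) IH (compA' HC) ut (compA' HC).
Qed.

Lemma iter_cancel {k : pzRingType} {C : msupercat k} (HC : is_msupercat C) (u v : Mor C 1 1) :
  mcomp C u v = midm C 1 ->
  forall j, mcomp C (iter j.+1 (mcomp C u) (midm C 1)) v = iter j (mcomp C u) (midm C 1).
Proof.
move=> uv; elim=> [|j IH] /=; first by rewrite (comp1r HC).
by rewrite -(compA' HC) -/(iter j.+1 (mcomp C u) (midm C 1)) IH.
Qed.

Lemma iter_even {k : pzRingType} {C : msupercat k} (HC : is_msupercat C) (u : Mor C 1 1) :
  mpar C false u -> forall j, mpar C false (iter j (mcomp C u) (midm C 1)).
Proof.
have HC' := HC; case: HC' => [_ pc pid _ _].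
move=> pu; elim=> [|j IH] /=; first exact: pid.
exact: (pc _ _ _ false false _ _ IH pu).
Qed.

Lemma xi_even {k : pzRingType} {C : msupercat k} (HC : is_msupercat C) (x xi : Mor C 1 1) :
  mpar C false x -> mcomp C x xi = midm C 1 -> mcomp C xi x = midm C 1 -> mpar C false xi.
Proof.
have HC' := HC; case: HC' => [[gr _ _ _ _] pc pid _ _].
move=> px xxi xix.
case: (gr 1%N 1%N) => _ cl dec both.
have [e [o [pe po dxi]]] := dec xi.
have pxe : mpar C false (mcomp C x e) by exact: (pc _ _ _ false false _ _ pe px).
have pxo : mpar C true (mcomp C x o) by exact: (pc _ _ _ true false _ _ po px).
have exo : mcomp C x o = (-1) *: mcomp C x e + midm C 1.
  by rewrite -xxi dxi (comp_addr HC) scaleN1r addKr.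
have xo0 : mcomp C x o = 0.
  by apply: both => //; rewrite exo; apply: cl => //; apply: pid.
have o0 : o = 0.
  rewrite -(comp1l HC _ _ o) -xix -(compA' HC) xo0.
  by rewrite -[X in mcomp C xi X](scale0r (0 : Mor C 1 1)) (comp_scaler HC) scale0r.
by rewrite dxi o0 addr0.
Qed.

Lemma XSr {k : pzRingType} {C : msupercat k} (HC : is_msupercat C) (x xi : Mor C 1 1) :
  mcomp C x xi = midm C 1 -> mcomp C xi x = midm C 1 ->
  forall n, xpow x xi (n + 1) = mcomp C (xpow x xi n) x.
Proof.
move=> xxi xix [m|[|m]].
- have -> : Posz m + 1 = Posz m.+1 by lia.
  by rewrite /= (iter_comm HC).
- by rewrite /= (comp1r HC) xix.
- have -> : Negz m.+1 + 1 = Negz m by lia.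
  by rewrite /xpow (iter_cancel HC).
Qed.

Lemma XPr {k : pzRingType} {C : msupercat k} (HC : is_msupercat C) (x xi : Mor C 1 1) :
  mcomp C x xi = midm C 1 -> mcomp C xi x = midm C 1 ->
  forall n, xpow x xi (n - 1) = mcomp C (xpow x xi n) xi.
Proof.
move=> xxi xix [[|m]|m].
- by rewrite /= (comp1r HC) (comp1l HC).
- have -> : Posz m.+1 - 1 = Posz m by lia.
  by rewrite /xpow (iter_cancel HC).
- have -> : Negz m - 1 = Negz m.+1 by lia.
  by rewrite /xpow (iter_comm HC).
Qed.

Lemma Xev {k : pzRingType} {C : msupercat k} (HC : is_msupercat C) (x xi : Mor C 1 1) :
  mpar C false x -> mpar C false xi -> forall n, mpar C false (xpow x xi n).
Proof. by move=> px pxi [m|m]; apply: iter_even. Qed.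

Lemma Xcomm {k : pzRingType} {C : msupercat k} (HC : is_msupercat C) (x xi t : Mor C 1 1) :
  mcomp C x t = mcomp C t x -> mcomp C xi t = mcomp C t xi ->
  forall n, mcomp C (xpow x xi n) t = mcomp C t (xpow x xi n).
Proof. by move=> ct cit [m|m]; apply: iter_comm. Qed.

Lemma Z2 {M : zmodType} (a b c d : M) : a - (b + c) = a + d - b - d - c.
Proof. by rewrite opprD addrA -[a + d - b]addrAC addrK. Qed.
Lemma Z3 {M : zmodType} (a b c d : M) : a - (b + c) = a + d - b - c - d.
Proof. by rewrite [a + d - b]addrAC [a - b + d - c]addrAC addrK opprD addrA. Qed.
Lemma Z4 {M : zmodType} (a b c : M) : a - (b - c) = a - b + c.
Proof. by rewrite opprB addrA addrAC. Qed.
Lemma Z5 {M : zmodType} (a b c : M) : a - (b + c) = a - b - c.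
Proof. by rewrite opprD addrA. Qed.

Theorem lemma3p1
  (k : comPzRingType) (z : k) (A : algType k) (Apar : bool -> pred A)
  (tr : A -> k) (nB : nat) (bA bAv : 'I_nB -> A)
  (C : msupercat k) (S Sm : Mor C 2 2) (tau : A -> Mor C 1 1) (x xi : Mor C 1 1) :
  (exists z' : k, z * z' = 1) ->
  is_symm_frobenius Apar tr bA bAv ->
  is_msupercat C ->
  QAW_relations Apar z bA bAv S Sm tau x xi ->
  let T := @Tel k A C z tau nB bA bAv in
  let X := xpow x xi in
  let I1 := midm C 1 in
  forall n : int,
  (* (i) *)
  (0 < n -> mcomp C S (mtens C I1 (X n)) =
     mcomp C (mtens C (X n) I1) Sm
     - \sum_(i < `|n|%N | (0 < i)%N) mcomp C (mtens C (X i%:Z) (X (n - i%:Z))) T) /\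
  (n <= 0 -> mcomp C S (mtens C I1 (X n)) =
     mcomp C (mtens C (X n) I1) Sm
     + \sum_(i < `|n|.+1) mcomp C (mtens C (X (- i%:Z)) (X (n + i%:Z))) T) /\
  (* (ii) *)
  (0 <= n -> mcomp C S (mtens C (X n) I1) =
     mcomp C (mtens C I1 (X n)) Sm
     + \sum_(i < `|n|.+1) mcomp C (mtens C (X i%:Z) (X (n - i%:Z))) T) /\
  (n < 0 -> mcomp C S (mtens C (X n) I1) =
     mcomp C (mtens C I1 (X n)) Sm
     - \sum_(i < `|n|%N | (0 < i)%N) mcomp C (mtens C (X (- i%:Z)) (X (n + i%:Z))) T) /\
  (* (iii) *)
  (0 < n -> mcomp C Sm (mtens C (X n) I1) =
     mcomp C (mtens C I1 (X n)) S
     + \sum_(i < `|n|%N | (0 < i)%N) mcomp C (mtens C (X i%:Z) (X (n - i%:Z))) T) /\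
  (n <= 0 -> mcomp C Sm (mtens C (X n) I1) =
     mcomp C (mtens C I1 (X n)) S
     - \sum_(i < `|n|.+1) mcomp C (mtens C (X (- i%:Z)) (X (n + i%:Z))) T) /\
  (* (iv) *)
  (0 <= n -> mcomp C Sm (mtens C I1 (X n)) =
     mcomp C (mtens C (X n) I1) S
     - \sum_(i < `|n|.+1) mcomp C (mtens C (X i%:Z) (X (n - i%:Z))) T) /\
  (n < 0 -> mcomp C Sm (mtens C I1 (X n)) =
     mcomp C (mtens C (X n) I1) S
     + \sum_(i < `|n|%N | (0 < i)%N) mcomp C (mtens C (X (- i%:Z)) (X (n + i%:Z))) T).
Proof.
move=> _ _ HC HQ T X I1 n.
case: HQ => [[pS pSm px ptau] _ [[xxi xix] _] _ [skein xtau rel1 rel2]].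
have HC' := HC; case: HC' => [_ _ pid _ [_ tid _ _ _]].
have pid1 := pid 1%N.
have pxi := xi_even HC _ _ px xxi xix.
have xitau : forall a, mcomp C xi (tau a) = mcomp C (tau a) xi.
  move=> a.
  rewrite -[in LHS](comp1r HC _ _ (tau a)) -xxi [mcomp C (tau a) (mcomp C x xi)](compA' HC) -xtau.
  by rewrite !(compA' HC) xix (comp1l HC).
have eS : S = Sm + @Tel k A C z tau nB bA bAv by rewrite -skein addrC subrK.
have eSm : Sm = S - @Tel k A C z tau nB bA bAv by rewrite -skein opprB addrC subrK.
set TT := @Tel k A C z tau nB bA bAv.
set XX := xpow x xi.
have Xe : forall m, mpar C false (XX m) := Xev HC _ _ px pxi.
have XS : forall m, XX (m + 1) = mcomp C (XX m) x := XSr HC _ _ xxi xix.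
have XP : forall m, XX (m - 1) = mcomp C (XX m) xi := XPr HC _ _ xxi xix.
have Xt : forall m a, mcomp C (XX m) (tau a) = mcomp C (tau a) (XX m).
  by move=> m a; apply: Xcomm.
have rxU : forall a b, mcomp C (mcomp C (mtens C (XX a) (XX b)) TT) (mtens C (midm C 1) x)
    = mcomp C (mtens C (XX a) (XX (b + 1))) TT.
  by move=> a b; rewrite -(compA' HC) (TcR HC) // (compA' HC) (xl1 HC) // (comp1r HC) XS.
have rxiU : forall a b, mcomp C (mcomp C (mtens C (XX a) (XX b)) TT) (mtens C (midm C 1) xi)
    = mcomp C (mtens C (XX a) (XX (b - 1))) TT.
  by move=> a b; rewrite -(compA' HC) (TcR HC) // (compA' HC) (xl1 HC) // (comp1r HC) XP.
have lxU : forall a b, mcomp C (mcomp C (mtens C (XX a) (XX b)) TT) (mtens C x (midm C 1))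
    = mcomp C (mtens C (XX (a + 1)) (XX b)) TT.
  by move=> a b; rewrite -(compA' HC) (TcL HC) // (compA' HC) (xl1 HC) // (comp1r HC) XS.
have lxiU : forall a b, mcomp C (mcomp C (mtens C (XX a) (XX b)) TT) (mtens C xi (midm C 1))
    = mcomp C (mtens C (XX (a - 1)) (XX b)) TT.
  by move=> a b; rewrite -(compA' HC) (TcL HC) // (compA' HC) (xl1 HC) // (comp1r HC) XP.
have rxK : forall v : Mor C 2 2,
    mcomp C (mcomp C v (mtens C (midm C 1) x)) (mtens C (midm C 1) xi) = v.
  by move=> v; rewrite -(compA' HC) (RR_ HC) xxi tid (comp1r HC).
have lxK : forall v : Mor C 2 2,
    mcomp C (mcomp C v (mtens C x (midm C 1))) (mtens C xi (midm C 1)) = v.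
  by move=> v; rewrite -(compA' HC) (LL_ HC) xxi tid (comp1r HC).
have X0 : XX 0 = midm C 1 by [].
have TT0 : mcomp C (mtens C (XX 0) (XX 0)) TT = TT by rewrite X0 tid (comp1l HC).
have RS : forall f : Mor C 1 1, mcomp C (mtens C (midm C 1) f) S
    = mcomp C (mtens C (midm C 1) f) Sm + mcomp C (mtens C (midm C 1) f) TT.
  by move=> f; rewrite {1}eS (comp_addr HC).
have LS : forall f : Mor C 1 1, mcomp C (mtens C f (midm C 1)) S
    = mcomp C (mtens C f (midm C 1)) Sm + mcomp C (mtens C f (midm C 1)) TT.
  by move=> f; rewrite {1}eS (comp_addr HC).
have SL : forall f : Mor C 1 1, mpar C false f -> (forall a, mcomp C f (tau a) = mcomp C (tau a) f) ->
    mcomp C S (mtens C f (midm C 1))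
    = mcomp C Sm (mtens C f (midm C 1)) + mcomp C (mtens C f (midm C 1)) TT.
  by move=> f pf cf; rewrite eS (comp_addl HC) (TcL HC).
have SR : forall f : Mor C 1 1, mpar C false f -> (forall a, mcomp C f (tau a) = mcomp C (tau a) f) ->
    mcomp C S (mtens C (midm C 1) f)
    = mcomp C Sm (mtens C (midm C 1) f) + mcomp C (mtens C (midm C 1) f) TT.
  by move=> f pf cf; rewrite eS (comp_addl HC) (TcR HC).
have SmRx : mcomp C Sm (mtens C (midm C 1) x)
    = mcomp C (mtens C x (midm C 1)) Sm - mcomp C TT (mtens C (midm C 1) x).
  by rewrite {1}eSm (comp_subl HC) rel1.
pose U := fun a b => mcomp C (mtens C (XX a) (XX b)) TT.
pose D1 := fun n => mcomp C S (mtens C (midm C 1) (XX n)) - mcomp C (mtens C (XX n) (midm C 1)) Sm.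
pose D2 := fun n => mcomp C S (mtens C (XX n) (midm C 1)) - mcomp C (mtens C (midm C 1) (XX n)) Sm.
pose D3 := fun n => mcomp C Sm (mtens C (XX n) (midm C 1)) - mcomp C (mtens C (midm C 1) (XX n)) S.
pose D4 := fun n => mcomp C Sm (mtens C (midm C 1) (XX n)) - mcomp C (mtens C (XX n) (midm C 1)) S.
have D1S : forall m, mcomp C (D1 m) (mtens C (midm C 1) x) = D1 (m + 1) + U m 1.
  move=> m; rewrite /D1 /U (comp_subl HC) -!(compA' HC) (RR_ HC) -XS SmRx (comp_subr HC).
  rewrite (compA' HC) (LL_ HC) -XS (compA' HC).
  have := rxU m 0; rewrite X0 add0r => ->.
  by rewrite Z4.
have D2S : forall m, mcomp C (D2 m) (mtens C x (midm C 1)) = D2 (m + 1) - U 0 (m + 1).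
  move=> m; rewrite /D2 /U (comp_subl HC) -!(compA' HC) (LL_ HC) -XS rel2 (compA' HC) (RR_ HC) -XS.
  by rewrite RS Z5.
have D3E : forall m, D3 m = D2 m - U m 0 - U 0 m.
  by move=> m; rewrite /D3 /D2 /U RS (SL _ (Xe m) (Xt m)); exact: Z2.
have D4E : forall m, D4 m = D1 m - U m 0 - U 0 m.
  by move=> m; rewrite /D4 /D1 /U LS (SR _ (Xe m) (Xt m)); exact: Z3.
have D10 : D1 0 = U 0 0.
  by rewrite /D1 /U TT0 X0 tid (comp1r HC) (comp1l HC) skein.
have D20 : D2 0 = U 0 0.
  by rewrite /D2 /U TT0 X0 tid (comp1r HC) (comp1l HC) skein.
have := @comb (Mor C 2 2) U D1 D2 D3 D4
  (fun v => mcomp C v (mtens C (midm C 1) x)) (fun v => mcomp C v (mtens C (midm C 1) xi))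
  (fun v => mcomp C v (mtens C x (midm C 1))) (fun v => mcomp C v (mtens C xi (midm C 1)))
  (fun a b => comp_subl HC _ _ _ a b _) (fun a b => comp_subl HC _ _ _ a b _)
  (fun a b => comp_subl HC _ _ _ a b _) (fun a b => comp_subl HC _ _ _ a b _)
  rxU rxiU lxU lxiU rxK lxK D10 D20 D1S D2S D3E D4E n.
move=> [h1 [h2 [h3 [h4 [h5 [h6 [h7 h8]]]]]]].
split; [move=> hn; apply: fromD; exact: h1 hn|].
split; [move=> hn; apply: fromD; exact: h2 hn|].
split; [move=> hn; apply: fromD; exact: h3 hn|].
split; [move=> hn; apply: fromD; exact: h4 hn|].
split; [move=> hn; apply: fromD; exact: h5 hn|].
split; [move=> hn; apply: fromD; exact: h6 hn|].
split; [move=> hn; apply: fromD; exact: h7 hn|].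
move=> hn; apply: fromD; exact: h8 hn.
Qed.
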